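(* Let $\hat\theta$ be the maximum likelihood estimate of an ordered real sample $x_1 < x_2 < \dots < x_n$ from the Cauchy distribution, and let $F(x;\theta) = \int_{-\infty}^x f(y;\theta)\,dy$ be the Cauchy distribution function. Then: (i) if $n = 3$, $F(x_3;\hat\theta) + F(x_1;\hat\theta) = 2F(x_2;\hat\theta)$; (ii) if $n = 4$, $F(x_3;\hat\theta) - F(x_1;\hat\theta) = F(x_4;\hat\theta) - F(x_2;\hat\theta) = 1/2$.
   Context: $\mathbb{H} = \{\theta\in\mathbb{C}:\Im\theta>0\}$. For $\theta = \mu+i\sigma\in\mathbb{H}$, $f(x;\theta) = \frac{\sigma}{\pi}\frac{1}{(x-\mu)^2+\sigma^2}$ is the Cauchy density. The maximum likelihood estimate $\hat\theta$ is the unique maximizer over $\mathbb{H}$ of $\prod_{j=1}^n f(x_j;\theta)$. *)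

(* Defs.v *)
From Stdlib Require Import Reals List.
From Coquelicot Require Import Coquelicot.
Open Scope R_scope.

(* A parameter theta = mu + i sigma in the upper half-plane H is represented
   by the pair of reals (mu, sigma) with 0 < sigma. *)

Definition cauchy_pdf (mu sigma x : R) : R :=
  sigma / PI * / ((x - mu) ^ 2 + sigma ^ 2).

Definition likelihood (xs : list R) (mu sigma : R) : R :=
  fold_right (fun x acc => cauchy_pdf mu sigma x * acc) 1 xs.

Definition is_lik_maximizer (xs : list R) (mu sigma : R) : Prop :=
  0 < sigma /\
  forall mu' sigma', 0 < sigma' -> likelihood xs mu' sigma' <= likelihood xs mu sigma.

Definition is_MLE (xs : list R) (mu sigma : R) : Prop :=
  is_lik_maximizer xs mu sigma /\
  forall mu' sigma', is_lik_maximizer xs mu' sigma' -> mu' = mu /\ sigma' = sigma.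

Definition cauchy_cdf (mu sigma x : R) : R :=
  RInt_gen (cauchy_pdf mu sigma) (Rbar_locally m_infty) (at_point x).

(* Main.v *)
Require Import Defs.
From Stdlib Require Import Reals List Lra.
From Coquelicot Require Import Coquelicot.
Import ListNotations.
Open Scope R_scope.

Definition G (mu s t : R) := atan ((t - mu) / s) / PI.

Lemma den_pos (d s : R) : 0 < s -> 0 < d ^ 2 + s ^ 2.
Proof. intros. apply Rplus_le_lt_0_compat. apply pow2_ge_0. apply pow_lt; auto. Qed.

Lemma G_deriv mu s t : 0 < s -> is_derive (G mu s) t (cauchy_pdf mu s t).
Proof.
  intros Hs. unfold G, cauchy_pdf.
  assert (HP := PI_RGT_0).
  auto_derive. auto.
  unfold Rsqr. field. 
  split. apply Rgt_not_eq, den_pos; auto. lra.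
Qed.

Lemma atan_lim_minf : filterlim atan (Rbar_locally m_infty) (locally (- PI / 2)).
Proof.
  intros P [eps HP].
  assert (HPI := PI_RGT_0).
  set (y := - PI / 2 + Rmin eps PI / 2).
  assert (Hm1 : 0 < Rmin eps PI) by (apply Rmin_pos; [apply cond_pos | lra]).
  assert (Hm2 : Rmin eps PI <= eps) by apply Rmin_l.
  assert (Hm3 : Rmin eps PI <= PI) by apply Rmin_r.
  exists (tan y). intros x Hx. apply HP.
  assert (atan x < y).
  { rewrite <- (atan_tan y). apply atan_increasing; auto. unfold y; lra. }
  destruct (atan_bound x).
  change (Rabs (atan x - - PI / 2) < eps).
  rewrite Rabs_right; unfold y in *; lra.
Qed.

Lemma G_lim mu s : 0 < s -> filterlim (G mu s) (Rbar_locally m_infty) (locally (- 1 / 2)).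
Proof.
  intros Hs. unfold G.
  replace (-1/2) with ((- PI / 2) / PI) by (assert (HP := PI_RGT_0); field; lra).
  apply (filterlim_comp _ _ _ (fun t => atan ((t - mu) / s)) (fun z => z / PI) _ (locally (- PI / 2))).
  - apply (filterlim_comp _ _ _ (fun t => (t - mu) / s) atan _ (Rbar_locally m_infty)).
    + intros P [M HM]. exists (mu + s * M). intros x Hx. apply HM.
      apply (Rmult_lt_reg_r s); auto. unfold Rdiv. rewrite Rmult_assoc, Rinv_l; lra.
    + apply atan_lim_minf.
  - apply (continuous_mult (fun z => z) (fun _ => / PI)).
    apply continuous_id. apply continuous_const.
Qed.

Lemma cdf_eq mu s x : 0 < s -> cauchy_cdf mu s x = G mu s x + 1 / 2.
Proof.
  intros Hs. unfold cauchy_cdf.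
  apply is_RInt_gen_unique.
  replace (G mu s x + 1/2) with (G mu s x - (-1/2)) by lra.
  apply (is_RInt_gen_ext (Derive (G mu s)) (cauchy_pdf mu s)).
  - apply Filter_prod with (fun _ => True) (fun _ => True); [exists 0; auto | exact I | ].
    intros. apply is_derive_unique, G_deriv; auto.
  - apply is_RInt_gen_Derive.
    + apply Filter_prod with (fun _ => True) (fun _ => True); [exists 0; auto | exact I | ].
      intros. eexists. apply G_deriv; auto.
    + apply Filter_prod with (fun _ => True) (fun _ => True); [exists 0; auto | exact I | ].
      intros. apply continuous_ext with (cauchy_pdf mu s).
      intros; symmetry; apply is_derive_unique, G_deriv; auto.
      apply (ex_derive_continuous (V:=R_NormedModule) (cauchy_pdf mu s)). unfold cauchy_pdf. auto_derive.
      apply Rgt_not_eq, den_pos; auto.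
    + apply G_lim; auto.
    + intros P HP. exact (locally_singleton _ _ HP).
Qed.

Definition score_mu (xs : list R) mu s :=
  fold_right (fun x acc => 2*(x-mu)/((x-mu)^2+s^2) + acc) 0 xs.
Definition score_s (xs : list R) mu s :=
  fold_right (fun x acc => 1/s - 2*s/((x-mu)^2+s^2) + acc) 0 xs.

Lemma is_derive_val (f : R -> R) x l l' : l = l' -> is_derive f x l -> is_derive f x l'.
Proof. intros ->; auto. Qed.

Lemma lik_dmu xs mu s : 0 < s ->
  is_derive (fun t => likelihood xs (mu+t) s) 0 (likelihood xs mu s * score_mu xs mu s).
Proof.
  intros Hs. assert (HP := PI_RGT_0). induction xs as [|x xs IH].
  - simpl. replace (1*0) with 0 by ring. apply (is_derive_const (K:=R_AbsRing) (V:=R_NormedModule)).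
  - assert (Hd := den_pos (x - mu) s Hs).
    assert (Hf : is_derive (fun t => cauchy_pdf (mu+t) s x) 0
        (cauchy_pdf mu s x * (2*(x-mu)/((x-mu)^2+s^2)))).
    { unfold cauchy_pdf. 
      auto_derive. replace (mu+0) with mu by ring.
      replace ((x + - mu) * ((x + - mu) * 1) + s * (s * 1)) with ((x-mu)^2+s^2) by ring; lra.
      replace (mu+0) with mu by ring. field. lra. }
    pose proof (is_derive_mult _ _ _ _ _ Hf IH Rmult_comm) as H.
    eapply is_derive_ext. 2: { eapply is_derive_val. 2: exact H.
      unfold plus, mult; simpl. replace (mu+0) with mu by ring. 
      replace ((x - mu) * ((x - mu) * 1) + s * (s * 1)) with ((x-mu)^2+s^2) by ring.
      field. lra. }
    intros; reflexivity.
Qed.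

Lemma lik_ds xs mu s : 0 < s ->
  is_derive (fun t => likelihood xs mu (s+t)) 0 (likelihood xs mu s * score_s xs mu s).
Proof.
  intros Hs. assert (HP := PI_RGT_0). induction xs as [|x xs IH].
  - simpl. replace (1*0) with 0 by ring. apply (is_derive_const (K:=R_AbsRing) (V:=R_NormedModule)).
  - assert (Hd := den_pos (x - mu) s Hs).
    assert (Hf : is_derive (fun t => cauchy_pdf mu (s+t) x) 0
        (cauchy_pdf mu s x * (1/s - 2*s/((x-mu)^2+s^2)))).
    { unfold cauchy_pdf. 
      auto_derive. replace (s+0) with s by ring.
      replace ((x + - mu) * ((x + - mu) * 1) + s * (s * 1)) with ((x-mu)^2+s^2) by ring; lra.
      replace (s+0) with s by ring. field. lra. }
    pose proof (is_derive_mult _ _ _ _ _ Hf IH Rmult_comm) as H.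
    eapply is_derive_ext. 2: { eapply is_derive_val. 2: exact H.
      unfold plus, mult; simpl. replace (s+0) with s by ring. 
      replace ((x - mu) * ((x - mu) * 1) + s * (s * 1)) with ((x-mu)^2+s^2) by ring.
      field. lra. }
    intros; reflexivity.
Qed.

Lemma local_max_deriv (g : R -> R) l d : 0 < d -> is_derive g 0 l ->
  (forall t, -d < t < d -> g t <= g 0) -> l = 0.
Proof.
  intros Hd H Hm. apply is_derive_Reals in H.
  pose proof (deriv_maximum g (-d) d 0 (exist _ l H)) as K.
  simpl in K. apply K; try lra. intros; apply Hm; lra.
Qed.

Lemma lik_pos xs mu s : 0 < s -> 0 < likelihood xs mu s.
Proof.
  intros Hs. assert (HP := PI_RGT_0). induction xs as [|x xs IH]; simpl. lra.
  apply Rmult_lt_0_compat; auto. unfold cauchy_pdf.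
  apply Rmult_lt_0_compat. apply Rdiv_lt_0_compat; auto. apply Rinv_0_lt_compat, den_pos; auto.
Qed.

Lemma MLE_scores xs mu s : is_MLE xs mu s -> 0 < s /\ score_mu xs mu s = 0 /\ score_s xs mu s = 0.
Proof.
  intros [[Hs Hmax] _]. split; auto.
  assert (HL := lik_pos xs mu s Hs).
  split.
  - assert (E : likelihood xs mu s * score_mu xs mu s = 0).
    { apply (local_max_deriv (fun t => likelihood xs (mu+t) s) _ 1). lra.
      apply lik_dmu; auto. intros t _. replace (mu+0) with mu by ring. apply Hmax; auto. }
    apply Rmult_integral in E. destruct E; auto. lra.
  - assert (E : likelihood xs mu s * score_s xs mu s = 0).
    { apply (local_max_deriv (fun t => likelihood xs mu (s+t)) _ s). lra.
      apply lik_ds; auto. intros t Ht. replace (s+0) with s by ring. apply Hmax; lra. }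
    apply Rmult_integral in E. destruct E; auto. lra.
Qed.
Lemma cos2_diff a b : (cos (atan b - atan a))^2 * ((1+a^2)*(1+b^2)) = (1+a*b)^2.
Proof.
  rewrite cos_minus, !cos_atan, !sin_atan.
  assert (Ha : 0 < 1 + a²) by (unfold Rsqr; nra).
  assert (Hb : 0 < 1 + b²) by (unfold Rsqr; nra).
  pose proof (sqrt_sqrt _ (Rlt_le _ _ Ha)) as Ea.
  pose proof (sqrt_sqrt _ (Rlt_le _ _ Hb)) as Eb.
  pose proof (sqrt_lt_R0 _ Ha). pose proof (sqrt_lt_R0 _ Hb).
  set (p := sqrt (1 + a²)) in *. set (q := sqrt (1 + b²)) in *.
  replace (1 + a^2) with (p*p) by (rewrite Ea; unfold Rsqr; ring).
  replace (1 + b^2) with (q*q) by (rewrite Eb; unfold Rsqr; ring).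
  field. lra.
Qed.

Lemma diff_range a b : a < b -> 0 < atan b - atan a < PI.
Proof.
  intros H. pose proof (atan_increasing a b H). pose proof (atan_bound a). pose proof (atan_bound b). lra.
Qed.

Lemma third a b : a < b -> 4 * (1+a*b)^2 = (1+a^2)*(1+b^2) ->
  atan b - atan a = PI/3 \/ atan b - atan a = 2*PI/3.
Proof.
  intros H E. pose proof (diff_range a b H). pose proof (cos2_diff a b).
  assert (0 < (1+a^2)*(1+b^2)) by nra.
  set (d := atan b - atan a) in *.
  assert (C : cos d ^ 2 = 1/4).
  { apply (Rmult_eq_reg_r ((1+a^2)*(1+b^2))). rewrite H1. lra. lra. }
  assert (HP := PI_RGT_0).
  assert (cos d = 1/2 \/ cos d = -(1/2)) as [C1|C1].
  { assert ((cos d - 1/2) * (cos d + 1/2) = 0) by nra.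
    apply Rmult_integral in H3. lra. }
  - left. apply cos_inj; try lra. rewrite cos_PI3; auto.
  - right. apply cos_inj; try lra.
    replace (2*PI/3) with (PI - PI/3) by field. rewrite Rtrigo_facts.cos_pi_minus, cos_PI3. auto.
Qed.

Lemma quarter a b : a < b -> 1 + a*b = 0 -> atan b - atan a = PI/2.
Proof.
  intros H E. pose proof (diff_range a b H). pose proof (cos2_diff a b).
  assert (0 < (1+a^2)*(1+b^2)) by nra.
  set (d := atan b - atan a) in *.
  assert (C : cos d ^ 2 = 0).
  { apply (Rmult_eq_reg_r ((1+a^2)*(1+b^2))). rewrite H1, E. lra. lra. }
  assert (HP := PI_RGT_0).
  apply cos_inj; try lra. rewrite cos_PI2. nra.
Qed.
Lemma n3_alg u1 u2 u3 s : 0 < s ->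
  2*(s*u1)/((s*u1)^2+s^2) + (2*(s*u2)/((s*u2)^2+s^2) + (2*(s*u3)/((s*u3)^2+s^2) + 0)) = 0 ->
  (1/s - 2*s/((s*u1)^2+s^2)) + ((1/s - 2*s/((s*u2)^2+s^2)) + ((1/s - 2*s/((s*u3)^2+s^2)) + 0)) = 0 ->
  u1*u2+u1*u3+u2*u3 = -3 /\ u1+u2+u3 = -3*(u1*u2*u3).
Proof.
  intros Hs Hm Hsig.
  assert (P1 : 0 < 1 + u1^2) by nra. assert (P2 : 0 < 1 + u2^2) by nra. assert (P3 : 0 < 1 + u3^2) by nra.
  assert (Q1 : 0 < (s*u1)^2 + s^2) by nra. assert (Q2 : 0 < (s*u2)^2 + s^2) by nra.
  assert (Q3 : 0 < (s*u3)^2 + s^2) by nra. assert (Q4 : forall u, 0 < (s*u)^2 + s^2) by (intros; nra).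
  set (A := 1/(1+u1^2) + 1/(1+u2^2) + 1/(1+u3^2) - 3/2).
  set (B := u1/(1+u1^2) + u2/(1+u2^2) + u3/(1+u3^2)).
  assert (HB : B = 0).
  { rewrite <- (Rmult_0_r (s/2)), <- Hm. unfold B. field. repeat split; lra. }
  assert (HA : A = 0).
  { rewrite <- (Rmult_0_r (-s/2)), <- Hsig. unfold A. field. repeat split; lra. }
  set (e1 := u1+u2+u3). set (e2 := u1*u2+u1*u3+u2*u3). set (e3 := u1*u2*u3).
  assert (R1 : (3 + e2)/2 = A*(1-e2) - B*(e3-e1)). { unfold A, B, e1, e2, e3. field. repeat split; lra. }
  assert (R2 : -(e1+3*e3)/2 = A*(e3-e1) + B*(1-e2)). { unfold A, B, e1, e2, e3. field. repeat split; lra. }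
  rewrite HA, HB in R1, R2. split; lra.
Qed.

Lemma n4_alg u1 u2 u3 u4 s : 0 < s ->
  2*(s*u1)/((s*u1)^2+s^2) + (2*(s*u2)/((s*u2)^2+s^2) + (2*(s*u3)/((s*u3)^2+s^2) + (2*(s*u4)/((s*u4)^2+s^2) + 0))) = 0 ->
  (1/s - 2*s/((s*u1)^2+s^2)) + ((1/s - 2*s/((s*u2)^2+s^2)) + ((1/s - 2*s/((s*u3)^2+s^2)) + ((1/s - 2*s/((s*u4)^2+s^2)) + 0))) = 0 ->
  u1*u2*u3*u4 = 1 /\ u1+u2+u3+u4 + (u1*u2*u3+u1*u2*u4+u1*u3*u4+u2*u3*u4) = 0.
Proof.
  intros Hs Hm Hsig.
  assert (P1 : 0 < 1 + u1^2) by nra. assert (P2 : 0 < 1 + u2^2) by nra. assert (P3 : 0 < 1 + u3^2) by nra.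
  assert (P4 : 0 < 1 + u4^2) by nra.
  assert (Q1 : 0 < (s*u1)^2 + s^2) by nra. assert (Q2 : 0 < (s*u2)^2 + s^2) by nra.
  assert (Q3 : 0 < (s*u3)^2 + s^2) by nra. assert (Q4 : forall u, 0 < (s*u)^2 + s^2) by (intros; nra).
  assert (Q5 := Q4 u4).
  set (A := 1/(1+u1^2) + 1/(1+u2^2) + 1/(1+u3^2) + 1/(1+u4^2) - 2).
  set (B := u1/(1+u1^2) + u2/(1+u2^2) + u3/(1+u3^2) + u4/(1+u4^2)).
  assert (HB : B = 0).
  { rewrite <- (Rmult_0_r (s/2)), <- Hm. unfold B. field. repeat split; lra. }
  assert (HA : A = 0).
  { rewrite <- (Rmult_0_r (-s/2)), <- Hsig. unfold A. field. repeat split; lra. }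
  set (e1 := u1+u2+u3+u4). set (e2 := u1*u2+u1*u3+u1*u4+u2*u3+u2*u4+u3*u4).
  set (e3 := u1*u2*u3+u1*u2*u4+u1*u3*u4+u2*u3*u4). set (e4 := u1*u2*u3*u4).
  assert (R1 : 2 - 2*e4 = A*(1-e2+e4) - B*(e3-e1)). { unfold A, B, e1, e2, e3, e4. field. repeat split; lra. }
  assert (R2 : -(e1+e3) = A*(e3-e1) + B*(1-e2+e4)). { unfold A, B, e1, e2, e3, e4. field. repeat split; lra. }
  rewrite HA, HB in R1, R2. split; lra.
Qed.

Lemma ord_u x y mu s : 0 < s -> x < y -> (x - mu)/s < (y - mu)/s.
Proof. intros. unfold Rdiv. apply Rmult_lt_compat_r. apply Rinv_0_lt_compat; auto. lra. Qed.

Lemma xsub x mu s : 0 < s -> x - mu = s * ((x - mu)/s).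
Proof. intros. field. lra. Qed.

Theorem mainTheorem12 :
  (forall (x1 x2 x3 mu sigma : R),
      x1 < x2 -> x2 < x3 ->
      is_MLE [x1; x2; x3] mu sigma ->
      cauchy_cdf mu sigma x3 + cauchy_cdf mu sigma x1 = 2 * cauchy_cdf mu sigma x2)
  /\
  (forall (x1 x2 x3 x4 mu sigma : R),
      x1 < x2 -> x2 < x3 -> x3 < x4 ->
      is_MLE [x1; x2; x3; x4] mu sigma ->
      cauchy_cdf mu sigma x3 - cauchy_cdf mu sigma x1 = 1 / 2 /\
      cauchy_cdf mu sigma x4 - cauchy_cdf mu sigma x2 = 1 / 2).
Proof.
  assert (HP := PI_RGT_0).
  split.
  - intros x1 x2 x3 mu s H12 H23 HM.
    destruct (MLE_scores _ _ _ HM) as [Hs [Hm Hsg]].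
    unfold score_mu in Hm; unfold score_s in Hsg; cbn [fold_right] in Hm, Hsg.
    rewrite (xsub x1 mu s), (xsub x2 mu s), (xsub x3 mu s) in Hm, Hsg by auto.
    rewrite !cdf_eq by auto. unfold G.
    pose proof (ord_u _ _ mu s Hs H12). pose proof (ord_u _ _ mu s Hs H23).
    set (u1 := (x1 - mu)/s) in *. set (u2 := (x2 - mu)/s) in *. set (u3 := (x3 - mu)/s) in *.
    destruct (n3_alg u1 u2 u3 s Hs Hm Hsg) as [E2 E1].
    assert (T12 : 4 * (1+u1*u2)^2 = (1+u1^2)*(1+u2^2)).
    { assert (4 * (1+u1*u2)^2 - (1+u1^2)*(1+u2^2) =
        (1+3*(u1*u2))*((u1*u2+u1*u3+u2*u3)+3) - (u1+u2)*((u1+u2+u3)+3*(u1*u2*u3))) by ring.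
      rewrite E2, E1 in H1. lra. }
    assert (T23 : 4 * (1+u2*u3)^2 = (1+u2^2)*(1+u3^2)).
    { assert (4 * (1+u2*u3)^2 - (1+u2^2)*(1+u3^2) =
        (1+3*(u2*u3))*((u1*u2+u1*u3+u2*u3)+3) - (u2+u3)*((u1+u2+u3)+3*(u1*u2*u3))) by ring.
      rewrite E2, E1 in H1. lra. }
    pose proof (third u1 u2 H T12). pose proof (third u2 u3 H0 T23).
    pose proof (atan_bound u1). pose proof (atan_bound u3).
    assert (Ea : atan u3 + atan u1 = 2 * atan u2) by lra.
    assert (atan u3 / PI + atan u1 / PI = 2 * (atan u2 / PI)).
    { unfold Rdiv. rewrite <- Rmult_plus_distr_r, Ea. ring. }
    lra.
  - intros x1 x2 x3 x4 mu s H12 H23 H34 HM.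
    destruct (MLE_scores _ _ _ HM) as [Hs [Hm Hsg]].
    unfold score_mu in Hm; unfold score_s in Hsg; cbn [fold_right] in Hm, Hsg.
    rewrite (xsub x1 mu s), (xsub x2 mu s), (xsub x3 mu s), (xsub x4 mu s) in Hm, Hsg by auto.
    rewrite !cdf_eq by auto. unfold G.
    pose proof (ord_u _ _ mu s Hs H12). pose proof (ord_u _ _ mu s Hs H23).
    pose proof (ord_u _ _ mu s Hs H34).
    set (u1 := (x1 - mu)/s) in *. set (u2 := (x2 - mu)/s) in *. set (u3 := (x3 - mu)/s) in *.
    set (u4 := (x4 - mu)/s) in *.
    destruct (n4_alg u1 u2 u3 u4 s Hs Hm Hsg) as [E4 E13].
    assert (Z : (1+u1^2) * ((1+u1*u2)*(1+u1*u3)*(1+u1*u4)) = 0).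
    { assert ((1+u1^2) * ((1+u1*u2)*(1+u1*u3)*(1+u1*u4)) =
        (u1-u1)*(u1-u2)*(u1-u3)*(u1-u4) + (1 - u1*u2*u3*u4)*(1 - u1^4)
        + (u1 + u1^3)*(u1+u2+u3+u4 + (u1*u2*u3+u1*u2*u4+u1*u3*u4+u2*u3*u4))) by ring.
      rewrite H2, E4, E13. ring. }
    assert (P1 : 0 < 1 + u1^2) by nra.
    apply Rmult_integral in Z. destruct Z as [Z|Z]; [lra|].
    assert (K13 : 1 + u1*u3 = 0).
    { apply Rmult_integral in Z. destruct Z as [Z|Z].
      - apply Rmult_integral in Z. destruct Z as [Z|Z]; auto.
        exfalso. assert (u1 < 0) by nra. assert (0 < u2) by nra.
        assert (0 < u3*u4) by nra.
        assert (u1*u2*u3*u4 = (u1*u2)*(u3*u4)) by ring. nra.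
      - exfalso. assert (u1 < 0) by nra. assert (0 < u4) by nra.
        assert (E : (u1*u4)*(u2*u3) = 1) by (rewrite <- E4; ring).
        assert (u2*u3 = -1) by nra.
        assert (u2 < 0) by nra. assert (0 < u3) by nra.
        assert (-u2 < -u1) by lra. assert (u3 < u4) by lra.
        assert ((-u2)*u3 < (-u1)*u4) by (apply Rmult_le_0_lt_compat; lra). nra. }
    assert (K24 : 1 + u2*u4 = 0).
    { assert (E : (u1*u3)*(u2*u4) = 1) by (rewrite <- E4; ring).
      assert (u1*u3 = -1) by lra. nra. }
    pose proof (quarter u1 u3 ltac:(lra) K13). pose proof (quarter u2 u4 ltac:(lra) K24).
    split.
    + replace (atan u3 / PI + 1 / 2 - (atan u1 / PI + 1 / 2)) with ((atan u3 - atan u1)/PI) by (field; lra).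
      rewrite H2. field. lra.
    + replace (atan u4 / PI + 1 / 2 - (atan u2 / PI + 1 / 2)) with ((atan u4 - atan u2)/PI) by (field; lra).
      rewrite H3. field. lra.
Qed.
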